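(* Let $R$ be a regular run and $t>0$. The guard of SignalOpen [Dir = close and SafeToOpen] holds at $t$ (equivalently, SignalOpen fires at $t$) if and only if SafeToOpen becomes true at $t$. Consequently, SignalOpen fires at a moment $t>0$ only if TrackStatus$(x)$ becomes empty at $t$ for some track $x$.
   Context: Setting (evolving algebra for the railroad crossing). States are structures over a vocabulary containing: a finite universe Tracks; the reals and ExtendedReals $=\mathbb{R}\cup\{\infty\}$ with standard $<$ and $+$ ($\infty$ largest); a nullary real-valued symbol $\mathrm{CT}$ (current time); positive real constants $d_{close},d_{open},d_{min},d_{max}$ with $d_{close}<d_{min}\le d_{max}$; a unary function TrackStatus from Tracks to $\{\text{empty},\text{coming},\text{incrossing}\}$; a unary function Deadline from Tracks to ExtendedReals; a nullary Dir with values in $\{\text{open},\text{close}\}$; a nullary GateStatus with values in $\{\text{opened},\text{closed}\}$. Put $W=d_{min}-d_{close}$ and $\Delta_{close}=d_{close}+(d_{max}-d_{min})=d_{max}-W$. For a track $x$, $s(x)$ is the condition [$\mathrm{TrackStatus}(x)=\text{empty}$ or $\mathrm{CT}+d_{open}<\mathrm{Deadline}(x)$], and SafeToOpen is $\forall x\in\mathrm{Tracks}\ s(x)$. The program has two modules (agents). Gate: simultaneously OpenGate ''if Dir=open then GateStatus:=opened'' and CloseGate ''if Dir=close then GateStatus:=closed''. Controller: simultaneously, for every track $x$, SetDeadline$(x)$ ''if TrackStatus$(x)$=coming and Deadline$(x)=\infty$ then Deadline$(x):=\mathrm{CT}+W$'', SignalClose$(x)$ ''if $\mathrm{CT}=$Deadline$(x)$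 then Dir:=close'', ClearDeadline$(x)$ ''if TrackStatus$(x)$=empty and Deadline$(x)<\infty$ then Deadline$(x):=\infty$'', together with SignalOpen ''if Dir=close and SafeToOpen then Dir:=open''. Executing a module means computing all updates it generates in the current state and performing them simultaneously (nothing happens if the update set is inconsistent). A module is enabled at a state if its update set is consistent and contains an update that changes the state. TrackStatus is external (changed only by the environment); Deadline, Dir, GateStatus are internal (changed only by the modules); other symbols are static. Runs: for $t\mapsto R(t)$, $t\in[0,\infty)$, let $\rho(t)$ be the reduct of $R(t)$ without CT. $R$ is a pre-run if all $R(t)$ share a superuniverse, $\mathrm{CT}=t$ in $R(t)$, and for every $\tau>0$ there are $0=t_0<\dots<t_n=\tau$ with $\rho$ constant on each $(t_i,t_{i+1})$. For a term $e$ (free variables fixed), $e_t$ is its value in $R(t)$, $e_{t+}$ (resp. $e_{t-}$, $t>0$) its constant value on some $(t,t+\epsilon)$ (resp. $(t-\epsilon,t)$); likewise $\rho(t\pm)$. $e$ holds over an interval if it holds at each point; $e$ becomes (is set to) $a$ at $t$ if $e_{t-}\ne a=e_t$ or $e_t\neq a=e_{t+}$. A pre-run is a run if (i) whenever $\rho(t+)\neq\rho(t)$, $\rho(t+)$ is the CT-free reduct of the result of executing some modules at $R(t)$ (these agents fire at $t$), with external functions equal in $\rho(t)$ and $\rho(t+)$; (ii) whenever $t>0$ and $\rho(t)\ne\rho(t-)$, they differ only in external functions. An agent is immediate if it fires at every moment it is enabled; bounded if immediate or there is $b>0$ with no interval $(t,t+b)$ over which it is enabled but never fires. Initial states: TrackStatus$(x)$=empty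 and Deadline$(x)=\infty$ for every track $x$. A regular run is a run $R$ with $R(0)$ initial such that: (Train Motion) for each track $x$ there is a finite or infinite sequence $0=t_0<t_1<t_2<\cdots$ (the significant moments of $x$) with TrackStatus$(x)$=empty over each $[t_{3i},t_{3i+1})$, =coming over each $[t_{3i+1},t_{3i+2})$ where $d_{min}\le t_{3i+2}-t_{3i+1}\le d_{max}$, =incrossing over each $[t_{3i+2},t_{3i+3})$, and, if the sequence is finite with last element $t_k$, then $3\mid k$ and TrackStatus$(x)$=empty over $[t_k,\infty)$; (Controller Timing) Controller is immediate; (Gate Timing) Gate is bounded, there is no interval $(t,t+d_{close})$ over which Dir=close and GateStatus=opened both hold, and no interval $(t,t+d_{open})$ over which Dir=open and GateStatus=closed both hold. *)

(* Defs.v *)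
From Stdlib Require Import Reals Lra FinFun.
Open Scope R_scope.

Inductive ExtR : Type := Fin (r : R) | Inf.

Definition ext_lt (r : R) (e : ExtR) : Prop :=
  match e with Fin d => r < d | Inf => True end.

Inductive TStat : Type := empty | coming | incrossing.
Inductive DirV : Type := open | close.
Inductive GStat : Type := opened | closed.

(** CT-free reduct of a state (the superuniverse, the reals and the static
    constants are fixed; CT is supplied separately as the time). *)
Record State (T : Type) : Type := mkState {
  TrackStatus : T -> TStat;
  Deadline : T -> ExtR;
  Dir : DirV;
  GateStatus : GStat }.
Arguments mkState {T}.
Arguments TrackStatus {T}.
Arguments Deadline {T}.
Arguments Dir {T}.
Arguments GateStatus {T}.

Inductive Loc (T : Type) : Type := LDeadline (x : T) | LDir | LGate.
Arguments LDeadline {T}.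
Arguments LDir {T}.
Arguments LGate {T}.
Inductive Val : Type := VExt (e : ExtR) | VDir (d : DirV) | VGate (g : GStat).

Definition Update (T : Type) : Type := (Loc T * Val)%type.
Definition UpdSet (T : Type) : Type := Update T -> Prop.

Definition get {T} (st : State T) (l : Loc T) : Val :=
  match l with
  | LDeadline x => VExt (Deadline st x)
  | LDir => VDir (Dir st)
  | LGate => VGate (GateStatus st)
  end.

Definition consistent {T} (U : UpdSet T) : Prop :=
  forall l v v', U (l, v) -> U (l, v') -> v = v'.

Section Program.
Context {T : Type} (dclose dopen dmin dmax : R).

Definition W : R := dmin - dclose.

Definition s_cond (ct : R) (st : State T) (x : T) : Prop :=
  TrackStatus st x = empty \/ ext_lt (ct + dopen) (Deadline st x).

Definition SafeToOpen (ct : R) (st : State T) : Prop :=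
  forall x : T, s_cond ct st x.

Definition SignalOpen_guard (ct : R) (st : State T) : Prop :=
  Dir st = close /\ SafeToOpen ct st.

Definition gate_upd (ct : R) (st : State T) : UpdSet T :=
  fun u =>
    (Dir st = open /\ u = (LGate, VGate opened)) \/
    (Dir st = close /\ u = (LGate, VGate closed)).

Definition ctrl_upd (ct : R) (st : State T) : UpdSet T :=
  fun u =>
    (* SetDeadline(x) *)
    (exists x, TrackStatus st x = coming /\ Deadline st x = Inf /\
               u = (LDeadline x, VExt (Fin (ct + W)))) \/
    (* SignalClose(x) *)
    (exists x, Deadline st x = Fin ct /\ u = (LDir, VDir close)) \/
    (* ClearDeadline(x) *)
    (exists x, TrackStatus st x = empty /\ Deadline st x <> Inf /\
               u = (LDeadline x, VExt Inf)) \/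
    (SignalOpen_guard ct st /\ u = (LDir, VDir open)).

Inductive Agent : Type := GateA | ControllerA.

Definition upd (a : Agent) : R -> State T -> UpdSet T :=
  match a with GateA => gate_upd | ControllerA => ctrl_upd end.

Definition enabled (a : Agent) (ct : R) (st : State T) : Prop :=
  consistent (upd a ct st) /\
  exists l v, upd a ct st (l, v) /\ get st l <> v.

Definition exec (S : Agent -> Prop) (ct : R) (st st' : State T) : Prop :=
  let U : UpdSet T := fun u =>
    exists a, S a /\ consistent (upd a ct st) /\ upd a ct st u in
  TrackStatus st' = TrackStatus st /\
  forall l : Loc T,
    (forall v, U (l, v) -> get st' l = v) /\
    ((forall v, ~ U (l, v)) -> get st' l = get st l).

(** Runs. [rho t] is the CT-free reduct of R(t); CT = t in R(t). Only t >= 0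
    matters. *)
Variable rho : R -> State T.

Definition right_val {A : Type} (e : R -> A) (t : R) (a : A) : Prop :=
  exists eps, 0 < eps /\ forall s, t < s < t + eps -> e s = a.
Definition left_val {A : Type} (e : R -> A) (t : R) (a : A) : Prop :=
  exists eps, 0 < eps /\ forall s, t - eps < s < t -> e s = a.

Definition becomes {A : Type} (e : R -> A) (t : R) (a : A) : Prop :=
  (exists b, left_val e t b /\ b <> a /\ e t = a) \/
  (e t <> a /\ right_val e t a).

Definition becomes_true (P : R -> Prop) (t : R) : Prop :=
  ((exists eps, 0 < eps /\ forall s, t - eps < s < t -> ~ P s) /\ P t) \/
  (~ P t /\ exists eps, 0 < eps /\ forall s, t < s < t + eps -> P s).

Definition pre_run : Prop :=
  forall tau, 0 < tau ->
    exists (n : nat) (ts : nat -> R),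
      ts O = 0 /\ ts n = tau /\
      (forall i, (i < n)%nat -> ts i < ts (S i)) /\
      (forall i, (i < n)%nat -> forall s s',
          ts i < s < ts (S i) -> ts i < s' < ts (S i) -> rho s = rho s').

Definition fires (a : Agent) (t : R) : Prop :=
  exists (S : Agent -> Prop) (sg : State T),
    S a /\ right_val rho t sg /\ sg <> rho t /\ exec S t (rho t) sg.

Definition is_run : Prop :=
  pre_run /\
  (forall t sg, 0 <= t -> right_val rho t sg -> sg <> rho t ->
     exists S : Agent -> Prop, exec S t (rho t) sg) /\
  (forall t sg, 0 < t -> left_val rho t sg -> rho t <> sg ->
     Deadline (rho t) = Deadline sg /\ Dir (rho t) = Dir sg /\
     GateStatus (rho t) = GateStatus sg).

Definition immediate (a : Agent) : Prop :=
  forall t, 0 <= t -> enabled a t (rho t) -> fires a t.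

Definition bounded (a : Agent) : Prop :=
  immediate a \/
  exists b, 0 < b /\
    ~ (exists t, 0 <= t /\
         (forall s, t < s < t + b -> enabled a s (rho s)) /\
         (forall s, t < s < t + b -> ~ fires a s)).

Definition initial (st : State T) : Prop :=
  forall x, TrackStatus st x = empty /\ Deadline st x = Inf.

(** index i belongs to the (finite, with last index k, or infinite) sequence *)
Definition in_range (N : option nat) (i : nat) : Prop :=
  match N with None => True | Some k => (i <= k)%nat end.

Definition train_motion (x : T) : Prop :=
  exists (N : option nat) (ts : nat -> R),
    ts O = 0 /\
    (forall i, in_range N (S i) -> ts i < ts (S i)) /\
    (forall i s, in_range N (3 * i + 1) ->
       ts (3 * i)%nat <= s < ts (3 * i + 1)%nat -> TrackStatus (rho s) x = empty) /\
    (forall i, in_range N (3 * i + 2) ->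
       (forall s, ts (3 * i + 1)%nat <= s < ts (3 * i + 2)%nat ->
          TrackStatus (rho s) x = coming) /\
       dmin <= ts (3 * i + 2)%nat - ts (3 * i + 1)%nat <= dmax) /\
    (forall i s, in_range N (3 * i + 3) ->
       ts (3 * i + 2)%nat <= s < ts (3 * i + 3)%nat ->
       TrackStatus (rho s) x = incrossing) /\
    (match N with
     | None => True
     | Some k => Nat.modulo k 3 = O /\
                 forall s, ts k <= s -> TrackStatus (rho s) x = empty
     end).

Definition regular_run : Prop :=
  is_run /\ initial (rho 0) /\
  (forall x, train_motion x) /\
  immediate ControllerA /\
  bounded GateA /\
  ~ (exists t, 0 <= t /\ forall s, t < s < t + dclose ->
        Dir (rho s) = close /\ GateStatus (rho s) = opened) /\
  ~ (exists t, 0 <= t /\ forall s, t < s < t + dopen ->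
        Dir (rho s) = open /\ GateStatus (rho s) = closed).

Definition SignalOpen_fires (t : R) : Prop :=
  fires ControllerA t /\ SignalOpen_guard t (rho t).

End Program.

(* Main.v *)
Require Import Defs.
From Stdlib Require Import Reals FinFun Lra Lia Classical List.
Open Scope R_scope.

Lemma k3 : forall k:nat, exists i, k = (3*i)%nat \/ k = (3*i+1)%nat \/ k = (3*i+2)%nat.
Proof. intros. exists (k/3)%nat. pose proof (Nat.div_mod_eq k 3). pose proof (Nat.mod_upper_bound k 3). lia. Qed.
Lemma m3 : forall k:nat, (k mod 3 = 0)%nat -> exists q, k = (3*q)%nat.
Proof. intros. exists (k/3)%nat. pose proof (Nat.div_mod_eq k 3). lia. Qed.

Lemma real_ind (P : R -> Prop) (a b : R) :
  a <= b -> P a ->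
  (forall s, a <= s < b -> P s -> exists e, 0 < e /\ forall u, s < u < s + e -> P u) ->
  (forall s, a < s <= b -> (exists e, 0 < e /\ forall u, s - e < u < s -> P u) -> P s) ->
  forall s, a <= s <= b -> P s.
Proof.
  intros Hab Pa HR HL.
  set (E := fun s => a <= s <= b /\ forall u, a <= u <= s -> P u).
  assert (HbE : bound E) by (exists b; intros x [Hx _]; lra).
  assert (Ea : E a).
  { split; [lra|]. intros u Hu. replace u with a by lra. exact Pa. }
  destruct (completeness E HbE (ex_intro _ a Ea)) as [m [Hub Hlub]].
  assert (Ham : a <= m) by (apply Hub; exact Ea).
  assert (Hmb : m <= b).
  { apply Hlub. intros x [Hx _]; lra. }
  assert (A : forall u, a <= u < m -> P u).
  { intros u Hu. apply NNPP. intro HnP.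
    assert (m <= u); [|lra].
    apply Hlub. intros x [Hx Hx2]. destruct (Rle_or_lt x u); auto.
    exfalso. apply HnP. apply Hx2. lra. }
  assert (Pm : P m).
  { destruct (Req_dec m a) as [->|Hne]; [exact Pa|].
    apply HL; [lra|]. exists (m - a). split; [lra|]. intros u Hu. apply A. lra. }
  assert (Em : E m).
  { split; [lra|]. intros u Hu. destruct (Req_dec u m) as [->|Hne]; auto. apply A; lra. }
  assert (Hmb' : m = b).
  { destruct (Req_dec m b); auto. exfalso.
    destruct (HR m ltac:(lra) Pm) as [e [He Hu]].
    set (m' := m + Rmin e (b - m) / 2).
    assert (Hmin1 : Rmin e (b - m) <= e) by apply Rmin_l.
    assert (Hmin2 : Rmin e (b - m) <= b - m) by apply Rmin_r.
    assert (Hmin3 : 0 < Rmin e (b - m)) by (apply Rmin_pos; lra).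
    assert (E m').
    { unfold m'; split; [lra|]. intros u Hu'. destruct (Rle_or_lt u m).
      - destruct (Req_dec u m) as [->|]; auto. apply A; lra.
      - apply Hu. lra. }
    assert (m' <= m) by (apply Hub; auto). unfold m' in *. lra. }
  subst m. intros s Hs. destruct Em as [_ Hall]. apply Hall. lra.
Qed.

Lemma avoid_list : forall (L : list R) a b, a < b -> exists u, a < u < b /\ ~ In u L.
Proof.
  induction L as [|r L IH]; intros a b Hab.
  - exists ((a+b)/2). split; [lra|]. simpl; auto.
  - destruct (Rlt_or_le a r) as [H1|H1]; [destruct (Rlt_or_le r b) as [H2|H2]|].
    + destruct (IH a r H1) as [u [Hu Hn]]. exists u. split; [lra|].
      simpl. intros [E|E]; [lra|auto].
    + destruct (IH a b Hab) as [u [Hu Hn]]. exists u. split; [lra|].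
      simpl. intros [E|E]; [lra|auto].
    + destruct (IH a b Hab) as [u [Hu Hn]]. exists u. split; [lra|].
      simpl. intros [E|E]; [lra|auto].
Qed.

Lemma avoid_fin {T : Type} (HT : Finite T) (f : T -> ExtR) a b :
  a < b -> exists u, a < u < b /\ forall y, f y <> Fin u.
Proof.
  intros Hab. destruct HT as [l Hl].
  set (g := fun y => match f y with Fin r => r | Inf => a end).
  destruct (avoid_list (map g l) a b Hab) as [u [Hu Hn]].
  exists u. split; auto. intros y Hy. apply Hn.
  replace u with (g y) by (unfold g; rewrite Hy; reflexivity).
  apply in_map. apply Hl.
Qed.

Lemma search (ts : nat -> R) (s : R) n : ts O <= s -> s < ts n ->
  (forall i, (i < n)%nat -> ts i < ts (S i)) ->
  exists i, (i < n)%nat /\ ts i <= s < ts (S i).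
Proof.
  induction n as [|n IH]; intros H0 H1 H2; [lra|].
  destruct (Rlt_or_le s (ts n)) as [H|H].
  - destruct IH as [i [Hi Hi']]; auto. exists i; split; auto.
  - exists n. split; [lia|]. lra.
Qed.

Lemma right_val_unique {A : Type} (f : R -> A) t a b :
  right_val f t a -> right_val f t b -> a = b.
Proof.
  intros [e1 [He1 H1]] [e2 [He2 H2]].
  assert (0 < Rmin e1 e2) by (apply Rmin_pos; lra).
  pose proof (Rmin_l e1 e2). pose proof (Rmin_r e1 e2).
  rewrite <- (H1 (t + Rmin e1 e2 / 2)) by lra.
  apply H2; lra.
Qed.
Section Model.
Context {T : Type} (HT : Finite T) (dclose dopen dmin dmax : R)
  (Hclose : 0 < dclose) (Hopen : 0 < dopen) (Hmin : 0 < dmin) (Hcm : dclose < dmin)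
  (rho : R -> State T) (Hreg : regular_run dclose dopen dmin dmax rho).

Lemma Hpre : pre_run rho.
Proof. destruct Hreg as [[H _] _]. exact H. Qed.

Lemma Himm : immediate dclose dopen dmin rho ControllerA.
Proof. destruct Hreg as [_ [_ [_ [H _]]]]. exact H. Qed.

Lemma LV : forall t, 0 < t -> exists sl, left_val rho t sl.
Proof.
  intros t Ht. destruct (Hpre t Ht) as [n [ts [H0 [Hn [Hinc Hc]]]]].
  destruct n as [|m]; [lra|].
  pose proof (Hinc m ltac:(lia)) as Hm. rewrite Hn in Hm.
  exists (rho ((ts m + t) / 2)). exists (t - ts m). split; [lra|].
  intros s Hs. apply (Hc m ltac:(lia)); rewrite Hn; lra.
Qed.

Lemma RV : forall t, 0 <= t -> exists sg, right_val rho t sg.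
Proof.
  intros t Ht. destruct (Hpre (t+1) ltac:(lra)) as [n [ts [H0 [Hn [Hinc Hc]]]]].
  destruct (search ts t n) as [i [Hi Hi']]; try lra; auto.
  exists (rho (t + (ts (S i) - t) / 2)). exists (ts (S i) - t). split; [lra|].
  intros s Hs. apply (Hc i Hi); lra.
Qed.

Lemma no_fire : forall a b (st : State T) u ag, (forall s, a < s < b -> rho s = st) -> a < u < b ->
  ~ fires dclose dopen dmin rho ag u.
Proof.
  intros a b st u ag Hc Hu [S [sg [_ [[e [He Hr]] [Hne _]]]]].
  assert (0 < Rmin e (b - u)) by (apply Rmin_pos; lra).
  pose proof (Rmin_l e (b - u)). pose proof (Rmin_r e (b - u)).
  apply Hne. rewrite <- (Hr (u + Rmin e (b - u) / 2)) by lra.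
  rewrite (Hc (u + Rmin e (b - u) / 2)) by lra. symmetry; apply Hc; lra.
Qed.

Lemma ctrl_consistent : forall ct (st : State T),
  (forall y, Deadline st y <> Fin ct) \/ ~ SignalOpen_guard dopen ct st ->
  consistent (ctrl_upd dclose dopen dmin ct st).
Proof.
  intros ct st Hc l v v' H1 H2.
  destruct H1 as [[x [A1 [A2 E1]]]|[[x [A1 E1]]|[[x [A1 [A2 E1]]]|[G1 E1]]]];
  destruct H2 as [[y [B1 [B2 E2]]]|[[y [B1 E2]]|[[y [B1 [B2 E2]]]|[G2 E2]]]];
  inversion E1; subst; inversion E2; subst; auto; try congruence;
  destruct Hc as [Hc|Hc]; try (exfalso; apply Hc; auto; fail);
  try (exfalso; eapply Hc; eauto; fail).
Qed.

Lemma NoPending : forall a b (sg : State T), 0 <= a < b -> (forall s, a < s < b -> rho s = sg) ->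
  forall x, ~ (TrackStatus sg x = empty /\ Deadline sg x <> Inf) /\
            ~ (TrackStatus sg x = coming /\ Deadline sg x = Inf).
Proof.
  intros a b sg Hab Hc x.
  destruct (avoid_fin HT (Deadline sg) a b ltac:(lra)) as [u [Hu Hav]].
  assert (Hcons : consistent (ctrl_upd dclose dopen dmin u sg))
    by (apply ctrl_consistent; left; auto).
  assert (Hr : rho u = sg) by (apply Hc; lra).
  split; intros [H1 H2].
  - apply (no_fire a b sg u ControllerA Hc Hu). apply Himm; [lra|]. rewrite Hr.
    split; auto. exists (LDeadline x), (VExt Inf). split.
    + right; right; left. exists x. auto.
    + simpl. intro E; inversion E; auto.
  - apply (no_fire a b sg u ControllerA Hc Hu). apply Himm; [lra|]. rewrite Hr.
    split; auto. exists (LDeadline x), (VExt (Fin (u + W dclose dmin))). split.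
    + left. exists x. auto.
    + simpl. rewrite H2. intro E; inversion E.
Qed.


Lemma exec_info : forall S ct (st sg : State T), exec dclose dopen dmin S ct st sg ->
  TrackStatus sg = TrackStatus st /\
  (forall x, Deadline sg x = Deadline st x \/
     (TrackStatus st x = coming /\ Deadline st x = Inf /\ Deadline sg x = Fin (ct + W dclose dmin)) \/
     (TrackStatus st x = empty /\ Deadline sg x = Inf)) /\
  (Dir sg = open -> Dir st = open \/ SignalOpen_guard dopen ct st).
Proof.
  intros S ct st sg H. unfold exec in H. cbv zeta in H. destruct H as [HTS Hl].
  split; [exact HTS|]. split.
  - intros x. destruct (Hl (LDeadline x)) as [Hu Hn].
    destruct (classic (exists v, exists a, S a /\ consistent (upd dclose dopen dmin a ct st) /\
                upd dclose dopen dmin a ct st (LDeadline x, v))) as [[v Hv]|Hno].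
    + pose proof (Hu v Hv) as Hg. simpl in Hg. subst v.
      destruct Hv as [a [_ [_ Hup]]]. destruct a; simpl in Hup.
      * destruct Hup as [[_ E]|[_ E]]; inversion E.
      * destruct Hup as [[y [A1 [A2 E]]]|[[y [A1 E]]|[[y [A1 [A2 E]]]|[G E]]]];
          inversion E; subst.
        -- right; left. rewrite H1. auto.
        -- right; right. rewrite H1. auto.
    + left. assert (HH : get sg (LDeadline x) = get st (LDeadline x)).
      { apply Hn. intros v Hv. apply Hno. exists v. exact Hv. }
      simpl in HH. inversion HH. auto.
  - intros Ho. destruct (Hl LDir) as [Hu Hn].
    destruct (classic (exists v, exists a, S a /\ consistent (upd dclose dopen dmin a ct st) /\
                upd dclose dopen dmin a ct st (LDir, v))) as [[v Hv]|Hno].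
    + pose proof (Hu v Hv) as Hg. simpl in Hg. subst v. rewrite Ho in Hv.
      destruct Hv as [a [_ [_ Hup]]]. destruct a; simpl in Hup.
      * destruct Hup as [[_ E]|[_ E]]; inversion E.
      * destruct Hup as [[y [A1 [A2 E]]]|[[y [A1 E]]|[[y [A1 [A2 E]]]|[G E]]]];
          inversion E; subst; try (right; exact G).
    + left. assert (HH : get sg LDir = get st LDir).
      { apply Hn. intros v Hv. apply Hno. exists v. exact Hv. }
      simpl in HH. inversion HH. congruence.
Qed.

Lemma right_info : forall s (sg : State T), 0 <= s -> right_val rho s sg ->
  TrackStatus sg = TrackStatus (rho s) /\
  (forall x, Deadline sg x = Deadline (rho s) x \/
     (TrackStatus (rho s) x = coming /\ Deadline (rho s) x = Inf /\ Deadline sg x = Fin (s + W dclose dmin)) \/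
     (TrackStatus (rho s) x = empty /\ Deadline sg x = Inf)) /\
  (Dir sg = open -> Dir (rho s) = open \/ SignalOpen_guard dopen s (rho s)).
Proof.
  intros s sg Hs Hr. destruct (classic (sg = rho s)) as [->|Hne].
  - split; [reflexivity|]. split; [intros; left; reflexivity|intros; left; auto].
  - destruct Hreg as [[_ [H2 _]] _]. destruct (H2 s sg Hs Hr Hne) as [S HS].
    eapply exec_info; eauto.
Qed.

Lemma left_info : forall s (sl : State T), 0 < s -> left_val rho s sl ->
  Deadline (rho s) = Deadline sl /\ Dir (rho s) = Dir sl.
Proof.
  intros s sl Hs Hl. destruct (classic (rho s = sl)) as [->|Hne]; auto.
  destruct Hreg as [[_ [_ H3]] _]. destruct (H3 s sl Hs Hl Hne) as [A [B _]]; auto.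
Qed.


Definition tmd (x : T) (N : option nat) (ts : nat -> R) : Prop :=
    ts O = 0 /\
    (forall i, in_range N (S i) -> ts i < ts (S i)) /\
    (forall i s, in_range N (3 * i + 1) ->
       ts (3 * i)%nat <= s < ts (3 * i + 1)%nat -> TrackStatus (rho s) x = empty) /\
    (forall i, in_range N (3 * i + 2) ->
       (forall s, ts (3 * i + 1)%nat <= s < ts (3 * i + 2)%nat ->
          TrackStatus (rho s) x = coming) /\
       dmin <= ts (3 * i + 2)%nat - ts (3 * i + 1)%nat <= dmax) /\
    (forall i s, in_range N (3 * i + 3) ->
       ts (3 * i + 2)%nat <= s < ts (3 * i + 3)%nat ->
       TrackStatus (rho s) x = incrossing) /\
    (match N with
     | None => True
     | Some k => Nat.modulo k 3 = O /\
                 forall s, ts k <= s -> TrackStatus (rho s) x = empty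
     end).

Lemma tmd_of : forall x, exists N ts, tmd x N ts.
Proof. intros x. destruct Hreg as [_ [_ [H _]]]. exact (H x). Qed.

Lemma in_range_down : forall N i j, in_range N j -> (i <= j)%nat -> in_range N i.
Proof. intros [k|] i j; simpl; auto; lia. Qed.

Definition covers (N : option nat) (ts : nat -> R) k s :=
  in_range N k /\ ts k <= s /\ (in_range N (S k) -> s < ts (S k)).

Section Track.
Variable x : T.
Variable N : option nat.
Variable ts : nat -> R.
Hypothesis Htm : tmd x N ts.

Lemma mono : forall j i, in_range N j -> (i < j)%nat -> ts i < ts j.
Proof.
  destruct Htm as [_ [Hinc _]].
  induction j as [|j IH]; intros i Hr Hij; [lia|].
  pose proof (Hinc j Hr).
  destruct (Nat.eq_dec i j) as [->|Hne]; auto.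
  assert (ts i < ts j) by (apply IH; [eapply in_range_down; eauto|]; lia). lra.
Qed.

Lemma mono_le : forall j i, in_range N j -> (i <= j)%nat -> ts i <= ts j.
Proof.
  intros j i Hr Hij. destruct (Nat.eq_dec i j) as [->|]; [lra|].
  left; apply mono; auto; lia.
Qed.

Lemma ts_nonneg : forall j, in_range N j -> 0 <= ts j.
Proof.
  intros j Hr. destruct Htm as [H0 _]. rewrite <- H0. apply mono_le; auto; lia.
Qed.

Lemma covers_unique : forall k k' s, covers N ts k s -> covers N ts k' s -> k = k'.
Proof.
  intros k k' s [A1 [A2 A3]] [B1 [B2 B3]].
  destruct (Nat.lt_total k k') as [H|[H|H]]; auto; exfalso.
  - assert (s < ts (S k)) by (apply A3; apply (in_range_down N (S k) k'); auto; lia).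
    assert (ts (S k) <= ts k') by (apply mono_le; auto). lra.
  - assert (s < ts (S k')) by (apply B3; apply (in_range_down N (S k') k); auto; lia).
    assert (ts (S k') <= ts k) by (apply mono_le; auto). lra.
Qed.

Lemma duration : forall i, in_range N (3*i+2) -> ts (3*i+1)%nat + W dclose dmin < ts (3*i+2)%nat.
Proof.
  intros i Hr. destruct Htm as [_ [_ [_ [H _]]]]. destruct (H i Hr) as [_ [D _]].
  unfold W. lra.
Qed.

Lemma ts_lower : forall i, in_range N (3*i) -> INR i * dmin <= ts (3*i)%nat.
Proof.
  induction i as [|i IH]; intros Hr.
  - destruct Htm as [H0 _]. simpl. rewrite H0. lra.
  - rewrite S_INR.
    assert (IH' := IH ltac:(eapply in_range_down; eauto; lia)).
    destruct Htm as [_ [_ [_ [H _]]]].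
    destruct (H i ltac:(eapply in_range_down; eauto; lia)) as [_ [D _]].
    assert (ts (3*i)%nat <= ts (3*i+1)%nat) by (apply mono_le; [eapply in_range_down; eauto; lia|lia]).
    assert (ts (3*i+2)%nat <= ts (3 * S i)%nat) by (apply mono_le; [auto|lia]).
    lra.
Qed.

Lemma covers_exists : forall s, 0 <= s -> exists k, covers N ts k s.
Proof.
  intros s Hs. pose proof Htm as Htm'. destruct Htm' as [H0 [Hinc _]].
  pose proof ts_lower as TL.
  destruct N as [K|] eqn:EN.
  - destruct (Rle_or_lt (ts K) s) as [H|H].
    + exists K. split; [simpl; lia|]. split; auto. simpl; lia.
    + destruct (search ts s K) as [i [Hi Hi']]; try lra.
      { intros i Hi. apply Hinc. simpl; lia. }
      exists i. split; [simpl; lia|]. split; [lra|]. intros; lra.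
  - destruct (INR_unbounded (s / dmin)) as [n Hn].
    assert (s < INR n * dmin).
    { apply Rmult_gt_compat_r with (r := dmin) in Hn; auto.
      unfold Rdiv in Hn. rewrite Rmult_assoc, Rinv_l in Hn; lra. }
    pose proof (TL n I).
    destruct (search ts s (3*n)) as [i [Hi Hi']]; try lra.
    { intros i Hi. apply Hinc. simpl; auto. }
    exists i. split; [simpl; auto|]. split; [lra|]. intros; lra.
Qed.

Lemma status : forall k s, covers N ts k s ->
  (forall i, k = (3*i)%nat -> TrackStatus (rho s) x = empty) /\
  (forall i, k = (3*i+1)%nat -> TrackStatus (rho s) x = coming) /\
  (forall i, k = (3*i+2)%nat -> TrackStatus (rho s) x = incrossing).
Proof.
  intros k s [Hr [Hl Hu]]. destruct Htm as [_ [_ [He [Hc [Hi Hfin]]]]].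
  split; [|split]; intros i ->.
  - destruct (classic (in_range N (3*i+1))) as [Hr'|Hr'].
    + apply (He i s Hr'). split; auto. assert (E: S (3*i) = (3*i+1)%nat) by lia. rewrite E in Hu. apply Hu; auto.
    + destruct N as [K|]; cbn [in_range] in *; [|tauto]. destruct Hfin as [_ Hf].
      apply Hf. replace K with (3*i)%nat by lia. auto.
  - assert (Hr' : in_range N (3*i+2)).
    { destruct N as [K|]; cbn [in_range] in *; auto. destruct Hfin as [Hm _].
      destruct (m3 K Hm) as [q ->]. lia. }
    apply (proj1 (Hc i Hr')). split; auto. assert (E: S (3*i+1) = (3*i+2)%nat) by lia. rewrite E in Hu. apply Hu; auto.
  - assert (Hr' : in_range N (3*i+3)).
    { destruct N as [K|]; cbn [in_range] in *; auto. destruct Hfin as [Hm _].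
      destruct (m3 K Hm) as [q ->]. lia. }
    apply (Hi i s Hr'). split; auto. assert (E: S (3*i+2) = (3*i+3)%nat) by lia. rewrite E in Hu. apply Hu; auto.
Qed.


Definition Qx s := forall k, covers N ts k s ->
  (forall i, k = (3*i)%nat -> Deadline (rho s) x = Inf \/
      exists j, i = S j /\ s = ts k /\ Deadline (rho s) x = Fin (ts (3*j+1)%nat + W dclose dmin)) /\
  (forall i, k = (3*i+1)%nat -> (s = ts k /\ Deadline (rho s) x = Inf) \/
      (ts k < s /\ Deadline (rho s) x = Fin (ts k + W dclose dmin))) /\
  (forall i, k = (3*i+2)%nat -> Deadline (rho s) x = Fin (ts (3*i+1)%nat + W dclose dmin)).

Lemma Q0 : Qx 0.
Proof.
  intros k [Hr [Hl Hu]].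
  assert (k = O).
  { destruct k; auto. exfalso. pose proof (mono (S k) O Hr ltac:(lia)).
    destruct Htm as [H0 _]. lra. }
  subst k. destruct Hreg as [_ [Hinit _]].
  split; [|split]; intros i Hi; try lia.
  left. apply Hinit.
Qed.

Lemma Q_right : forall s, 0 <= s -> Qx s -> exists e, 0 < e /\ forall u, s < u < s + e -> Qx u.
Proof.
  intros s Hs HQ.
  destruct (covers_exists s Hs) as [k0 Hk0].
  destruct (RV s Hs) as [sg Hsg]. pose proof Hsg as [e0 [He0 Hc]].
  assert (He : exists e, 0 < e /\ e <= e0 /\ (in_range N (S k0) -> s + e <= ts (S k0))).
  { destruct (classic (in_range N (S k0))) as [Hr|Hr].
    - destruct Hk0 as [_ [_ H3]]. specialize (H3 Hr).
      exists (Rmin e0 (ts (S k0) - s)). split; [apply Rmin_pos; lra|].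
      split; [apply Rmin_l|]. intros _. pose proof (Rmin_r e0 (ts (S k0) - s)). lra.
    - exists e0. split; auto. split; [lra|]. tauto. }
  destruct He as [e [He [Hee Hes]]].
  exists e. split; auto. intros u Hu k Hk.
  assert (Hk0u : covers N ts k0 u).
  { destruct Hk0 as [H1 [H2 H3]]. split; auto. split; [lra|]. intros Hr. specialize (Hes Hr). lra. }
  pose proof (covers_unique _ _ _ Hk Hk0u). subst k.
  assert (Hru : rho u = sg) by (apply Hc; lra).
  rewrite Hru.
  destruct (right_info s sg Hs Hsg) as [HTS [HD _]].
  assert (NP := NoPending s (s + e) sg ltac:(lra) ltac:(intros v Hv; apply Hc; lra) x).
  destruct (status k0 s Hk0) as [S1 [S2 S3]].
  destruct (HQ k0 Hk0) as [Q1 [Q2 Q3]].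
  split; [|split]; intros i Hi.
  - left. specialize (S1 i Hi). destruct (Deadline sg x) eqn:E; auto.
    exfalso. apply (proj1 NP). rewrite HTS, S1. split; auto. congruence.
  - specialize (S2 i Hi). destruct (HD x) as [D1|[[D1 [D2 D3]]|[D1 D2]]].
    + destruct (Q2 i Hi) as [[A1 A2]|[A1 A2]].
      * exfalso. apply (proj2 NP). rewrite HTS, S2. split; auto. congruence.
      * right. split; [lra|]. congruence.
    + destruct (Q2 i Hi) as [[A1 A2]|[A1 A2]].
      * right. split; [lra|]. rewrite D3. congruence.
      * congruence.
    + congruence.
  - specialize (S3 i Hi). destruct (HD x) as [D1|[[D1 [D2 D3]]|[D1 D2]]].
    + rewrite D1. apply Q3; auto.
    + congruence.
    + congruence.
Qed.

Lemma Q_left : forall s, 0 < s -> (exists e, 0 < e /\ forall u, s - e < u < s -> Qx u) -> Qx s.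
Proof.
  intros s Hs [e1 [He1 HQ]] k Hk.
  destruct (LV s Hs) as [sl Hsl]. pose proof Hsl as [e0 [He0 Hc]].
  destruct (left_info s sl Hs Hsl) as [HD _].
  pose proof Hk as [Hr [Hl Hu]].
  destruct Hl as [Hlt|Heq].
  - set (u := s - Rmin (Rmin e0 e1) (s - ts k) / 2).
    assert (0 < Rmin (Rmin e0 e1) (s - ts k)) by (repeat apply Rmin_pos; lra).
    pose proof (Rmin_l (Rmin e0 e1) (s - ts k)). pose proof (Rmin_r (Rmin e0 e1) (s - ts k)).
    pose proof (Rmin_l e0 e1). pose proof (Rmin_r e0 e1).
    assert (Hku : covers N ts k u) by (split; auto; unfold u; split; [lra|]; intros Hr'; specialize (Hu Hr'); lra).
    assert (Hrho : rho u = sl) by (apply Hc; unfold u; lra).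
    destruct (HQ u ltac:(unfold u; lra) k Hku) as [Q1 [Q2 Q3]].
    rewrite Hrho, <- HD in Q1, Q2, Q3.
    split; [|split]; intros i Hi.
    + destruct (Q1 i Hi) as [A|[j [_ [A _]]]]; auto. unfold u in A; lra.
    + destruct (Q2 i Hi) as [[A _]|[_ A]]; [unfold u in A; lra|]. right; auto.
    + apply Q3; auto.
  - destruct k as [|k'].
    { destruct Htm as [H0 _]. lra. }
    assert (Hlt : ts k' < ts (S k')) by (apply mono; auto).
    set (u := s - Rmin (Rmin e0 e1) (s - ts k') / 2).
    assert (0 < Rmin (Rmin e0 e1) (s - ts k')) by (repeat apply Rmin_pos; lra).
    pose proof (Rmin_l (Rmin e0 e1) (s - ts k')). pose proof (Rmin_r (Rmin e0 e1) (s - ts k')).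
    pose proof (Rmin_l e0 e1). pose proof (Rmin_r e0 e1).
    assert (Hku : covers N ts k' u).
    { split; [apply (in_range_down N k' (S k')); auto|]. unfold u; split; [lra|]. intros _. lra. }
    assert (Hrho : rho u = sl) by (apply Hc; unfold u; lra).
    destruct (HQ u ltac:(unfold u; lra) k' Hku) as [Q1 [Q2 Q3]].
    rewrite Hrho, <- HD in Q1, Q2, Q3.
    split; [|split]; intros i Hi.
    + destruct i as [|j]; [lia|]. right. exists j. split; auto. split; [auto|].
      apply (Q3 j). lia.
    + left. split; [auto|]. destruct (Q1 i ltac:(lia)) as [A|[j [_ [A _]]]]; auto. unfold u in A; lra.
    + destruct (Q2 i ltac:(lia)) as [[A _]|[_ A]]; [unfold u in A; lra|].
      replace (ts (3*i+1)%nat) with (ts k') by (f_equal; lia). auto.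
Qed.

Lemma Q_all : forall s, 0 <= s -> Qx s.
Proof.
  intros s Hs. apply (real_ind Qx 0 s); auto.
  - apply Q0.
  - intros v Hv HQ. apply Q_right; auto; lra.
  - intros v Hv HQ. apply Q_left; auto; lra.
  - lra.
Qed.


Lemma DFin : forall j, in_range N (3*j+3) -> forall s,
  ts (3*j+1)%nat + W dclose dmin <= s < ts (3*j+3)%nat ->
  TrackStatus (rho s) x <> empty /\ Deadline (rho s) x = Fin (ts (3*j+1)%nat + W dclose dmin).
Proof.
  intros j Hr s Hs.
  assert (Hr2 : in_range N (3*j+2)) by (apply (in_range_down N _ (3*j+3)); auto; lia).
  assert (Hr1 : in_range N (3*j+1)) by (apply (in_range_down N _ (3*j+3)); auto; lia).
  pose proof (duration j Hr2). assert (0 < W dclose dmin) by (unfold W; lra).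
  assert (Hs0 : 0 <= s) by (pose proof (ts_nonneg _ Hr1); lra).
  destruct (Rlt_or_le s (ts (3*j+2)%nat)) as [Hlt2|Hlt2].
  - assert (Hc : covers N ts (3*j+1) s).
    { split; auto. split; [lra|]. intros _. replace (S (3*j+1)) with (3*j+2)%nat by lia. auto. }
    split.
    + rewrite (proj1 (proj2 (status _ _ Hc)) j eq_refl). discriminate.
    + destruct (proj1 (proj2 (Q_all s Hs0 _ Hc)) j eq_refl) as [[A _]|[_ A]]; auto. lra.
  - assert (Hc : covers N ts (3*j+2) s).
    { split; auto. split; [lra|]. intros _. replace (S (3*j+2)) with (3*j+3)%nat by lia. lra. }
    split.
    + rewrite (proj2 (proj2 (status _ _ Hc)) j eq_refl). discriminate.
    + apply (proj2 (proj2 (Q_all s Hs0 _ Hc)) j eq_refl).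
Qed.

Lemma Dir_close : forall j, in_range N (3*j+3) -> forall s,
  ts (3*j+1)%nat + W dclose dmin < s <= ts (3*j+3)%nat -> Dir (rho s) = close.
Proof.
  intros j Hr s Hs.
  set (d := ts (3*j+1)%nat + W dclose dmin). set (e := ts (3*j+3)%nat).
  assert (Hr2 : in_range N (3*j+2)) by (apply (in_range_down N _ (3*j+3)); auto; lia).
  assert (Hr1 : in_range N (3*j+1)) by (apply (in_range_down N _ (3*j+3)); auto; lia).
  pose proof (duration j Hr2). assert (0 < W dclose dmin) by (unfold W; lra).
  pose proof (ts_nonneg _ Hr1).
  assert (ts (3*j+2)%nat < ts (3*j+3)%nat) by (apply mono; auto; lia).
  assert (NS : forall v, d <= v < e -> ~ SignalOpen_guard dopen v (rho v)).
  { intros v Hv [_ Hsafe]. destruct (DFin j Hr v Hv) as [A B]. destruct (Hsafe x) as [C|C]; auto.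
    rewrite B in C. cbn [ext_lt] in C. unfold d in *. lra. }
  assert (P : forall v, d <= v <= e -> v = d \/ Dir (rho v) = close).
  { apply real_ind; [unfold d, e; lra|left; auto| |].
    - intros v Hv Pv. assert (Hv0 : 0 <= v) by (unfold d in Hv; lra).
      destruct (RV v Hv0) as [sg Hsg]. pose proof Hsg as [e0 [He0 Hc]].
      exists e0. split; auto. intros u Hu. right. rewrite (Hc u Hu).
      destruct (Dir sg) eqn:Ed; auto. exfalso.
      destruct (right_info v sg Hv0 Hsg) as [_ [_ HDir]].
      destruct (HDir Ed) as [Ho|G]; [|apply (NS v); auto].
      destruct Pv as [Pv|Pv]; [|congruence]. subst v.
      destruct (DFin j Hr d ltac:(unfold d, e in *; lra)) as [_ HDd].
      assert (Hcons : consistent (ctrl_upd dclose dopen dmin d (rho d)))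
        by (apply ctrl_consistent; right; apply NS; lra).
      assert (Hen : enabled dclose dopen dmin ControllerA d (rho d)).
      { split; auto. exists LDir, (VDir close). split.
        - right; left. exists x. auto.
        - simpl. rewrite Ho. discriminate. }
      destruct (Himm d Hv0 Hen) as [S [sg' [HS [Hsg' [_ Hex]]]]].
      rewrite (right_val_unique _ _ _ _ Hsg' Hsg) in Hex.
      unfold exec in Hex. cbv zeta in Hex. destruct Hex as [_ Hl].
      destruct (Hl LDir) as [Hu' _].
      assert (G : get sg LDir = VDir close).
      { apply Hu'. exists ControllerA. split; auto. split; auto. right; left. exists x. auto. }
      simpl in G. rewrite Ed in G. discriminate.
    - intros v Hv [e1 [He1 HP]]. right.
      destruct (LV v ltac:(unfold d in Hv; lra)) as [sl Hsl]. pose proof Hsl as [e0 [He0 Hc]].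
      destruct (left_info v sl ltac:(unfold d in Hv; lra) Hsl) as [_ HDir]. rewrite HDir.
      set (u := v - Rmin (Rmin e0 e1) (v - d) / 2).
      assert (0 < Rmin (Rmin e0 e1) (v - d)) by (repeat apply Rmin_pos; lra).
      pose proof (Rmin_l (Rmin e0 e1) (v - d)). pose proof (Rmin_r (Rmin e0 e1) (v - d)).
      pose proof (Rmin_l e0 e1). pose proof (Rmin_r e0 e1).
      rewrite <- (Hc u) by (unfold u; lra).
      destruct (HP u ltac:(unfold u; lra)) as [A|A]; auto. unfold u in A; lra. }
  destruct (P s ltac:(unfold d, e; lra)) as [A|A]; auto. unfold d in A; lra.
Qed.

Lemma becomes_empty_phase : forall t e0, 0 < t -> 0 < e0 ->
  TrackStatus (rho t) x = empty ->
  (forall v, t - e0 < v < t -> TrackStatus (rho v) x <> empty) ->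
  exists j, in_range N (3*j+3) /\ t = ts (3*j+3)%nat.
Proof.
  intros t e0 Ht He0 Hem Hne.
  destruct (covers_exists t ltac:(lra)) as [k Hk].
  destruct (status k t Hk) as [S1 [S2 S3]].
  destruct (k3 k) as [i [Hi|[Hi|Hi]]].
  - pose proof Hk as [Hr [Hl Hu]].
    destruct Hl as [Hlt|Heq].
    + exfalso. set (v := t - Rmin e0 (t - ts k) / 2).
      assert (0 < Rmin e0 (t - ts k)) by (apply Rmin_pos; lra).
      pose proof (Rmin_l e0 (t - ts k)). pose proof (Rmin_r e0 (t - ts k)).
      assert (Hkv : covers N ts k v).
      { split; auto. unfold v; split; [lra|]. intros Hr'. specialize (Hu Hr'). lra. }
      apply (Hne v ltac:(unfold v; lra)). apply (proj1 (status k v Hkv) i Hi).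
    + destruct i as [|j].
      { subst k. destruct Htm as [H0 _]. simpl in Heq. lra. }
      exists j. replace (3*j+3)%nat with k by lia. auto.
  - rewrite (S2 i Hi) in Hem. discriminate.
  - rewrite (S3 i Hi) in Hem. discriminate.
Qed.

End Track.

Lemma part1_fwd : forall t, 0 < t -> SignalOpen_guard dopen t (rho t) ->
  exists e, 0 < e /\ forall s, t - e < s < t -> ~ SafeToOpen dopen s (rho s).
Proof.
  intros t Ht [Hdir Hsafe].
  destruct (LV t Ht) as [sl Hsl]. pose proof Hsl as [e0 [He0 Hc]].
  destruct (left_info t sl Ht Hsl) as [_ HD].
  assert (0 < Rmin e0 t) by (apply Rmin_pos; lra).
  pose proof (Rmin_l e0 t). pose proof (Rmin_r e0 t).
  exists (Rmin e0 t). split; auto. intros s Hs HS.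
  rewrite (Hc s ltac:(lra)) in HS.
  destruct (avoid_fin HT (Deadline sl) (t - Rmin e0 t) s ltac:(lra)) as [u [Hu Hav]].
  assert (Hsu : SafeToOpen dopen u sl).
  { intros y. destruct (HS y) as [A|A]; [left; auto|right].
    destruct (Deadline sl y); simpl in *; auto. lra. }
  assert (Hen : enabled dclose dopen dmin ControllerA u sl).
  { split; [apply ctrl_consistent; left; auto|].
    exists LDir, (VDir open). split.
    - right; right; right. split; auto. split; auto. congruence.
    - simpl. rewrite <- HD, Hdir. discriminate. }
  assert (Hru : rho u = sl) by (apply Hc; lra).
  rewrite <- Hru in Hen.
  apply (no_fire (t - e0) t sl u ControllerA Hc ltac:(lra)).
  apply Himm; auto; lra.
Qed.

Lemma left_witness : forall t sl, 0 < t -> SafeToOpen dopen t (rho t) -> left_val rho t sl ->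
  (exists e, 0 < e /\ forall s, t - e < s < t -> ~ SafeToOpen dopen s (rho s)) ->
  exists x, TrackStatus sl x <> empty /\ TrackStatus (rho t) x = empty.
Proof.
  intros t sl Ht Hsafe Hsl [e [He Hne]].
  pose proof Hsl as [e0 [He0 Hc]].
  destruct (left_info t sl Ht Hsl) as [HD _].
  set (u := t - Rmin e e0 / 2).
  assert (0 < Rmin e e0) by (apply Rmin_pos; lra).
  pose proof (Rmin_l e e0). pose proof (Rmin_r e e0).
  assert (Hnu := Hne u ltac:(unfold u; lra)).
  rewrite (Hc u ltac:(unfold u; lra)) in Hnu.
  apply not_all_ex_not in Hnu. destruct Hnu as [x Hx].
  exists x. unfold s_cond in Hx. split; [intro; apply Hx; left; auto|].
  destruct (Hsafe x) as [A|A]; auto. exfalso. apply Hx. right.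
  rewrite HD in A. destruct (Deadline sl x); simpl in *; auto. unfold u in *; lra.
Qed.

Lemma part1_bwd : forall t, 0 < t -> becomes_true (fun s => SafeToOpen dopen s (rho s)) t ->
  SignalOpen_guard dopen t (rho t).
Proof.
  intros t Ht [[Hleft HPt]|[HnP [e [He HP]]]].
  - split; auto.
    destruct (LV t Ht) as [sl Hsl]. pose proof Hsl as [e0 [He0 Hc]].
    destruct (left_witness t sl Ht HPt Hsl Hleft) as [x [A B]].
    destruct (tmd_of x) as [N [ts Htm]].
    destruct (becomes_empty_phase x N ts Htm t e0 Ht He0 B) as [j [Hr Ej]].
    { intros v Hv. rewrite (Hc v Hv). auto. }
    apply (Dir_close x N ts Htm j Hr). split; [|lra].
    assert (Hr2 : in_range N (3*j+2)) by (apply (in_range_down N _ (3*j+3)); auto; lia).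
    pose proof (duration x N ts Htm j Hr2).
    assert (ts (3*j+2)%nat < ts (3*j+3)%nat) by (apply (mono x N ts Htm); auto; lia).
    lra.
  - exfalso. apply not_all_ex_not in HnP. destruct HnP as [x Hx].
    unfold s_cond in Hx.
    destruct (RV t ltac:(lra)) as [sg Hsg]. pose proof Hsg as [e0 [He0 Hc]].
    set (u := t + Rmin e e0 / 2).
    assert (0 < Rmin e e0) by (apply Rmin_pos; lra).
    pose proof (Rmin_l e e0). pose proof (Rmin_r e e0).
    assert (Hu := HP u ltac:(unfold u; lra) x).
    rewrite (Hc u ltac:(unfold u; lra)) in Hu.
    destruct (right_info t sg ltac:(lra) Hsg) as [HTS [HD _]].
    destruct Hu as [Hu|Hu].
    + apply Hx. left. rewrite <- HTS. auto.
    + destruct (HD x) as [D1|[[D1 [D2 D3]]|[D1 D2]]].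
      * rewrite D1 in Hu. apply Hx. right. destruct (Deadline (rho t) x); simpl in *; auto.
        unfold u in *; lra.
      * apply Hx. right. rewrite D2. simpl. auto.
      * apply Hx. left. auto.
Qed.

Lemma part2_fwd : forall t, 0 < t -> SignalOpen_guard dopen t (rho t) ->
  fires dclose dopen dmin rho ControllerA t.
Proof.
  intros t Ht [Hdir Hsafe]. apply Himm; [lra|].
  assert (Hno : forall y, Deadline (rho t) y <> Fin t).
  { intros y Hy. destruct (Hsafe y) as [A|A].
    2:{ rewrite Hy in A. simpl in A. lra. }
    destruct (tmd_of y) as [N [ts Htm]].
    destruct (covers_exists y N ts Htm t ltac:(lra)) as [k Hk].
    destruct (status y N ts Htm k t Hk) as [_ [S2 S3]].
    destruct (Q_all y N ts Htm t ltac:(lra) k Hk) as [Q1 _].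
    destruct (k3 k) as [i [Hi|[Hi|Hi]]].
    - destruct (Q1 i Hi) as [B|[j [Ej [Et B]]]]; [congruence|].
      rewrite Hy in B. assert (B' : t = ts (3*j+1)%nat + W dclose dmin) by congruence.
      subst i. subst k. destruct Hk as [Hr _].
      replace (3 * S j)%nat with (3*j+3)%nat in * by lia.
      assert (Hr2 : in_range N (3*j+2)) by (apply (in_range_down N _ (3*j+3)); auto; lia).
      pose proof (duration y N ts Htm j Hr2).
      assert (ts (3*j+2)%nat < ts (3*j+3)%nat) by (apply (mono y N ts Htm); auto; lia).
      lra.
    - rewrite (S2 i Hi) in A. discriminate.
    - rewrite (S3 i Hi) in A. discriminate. }
  split; [apply ctrl_consistent; left; auto|].
  exists LDir, (VDir open). split.
  - right; right; right. split; auto. split; auto.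
  - simpl. rewrite Hdir. discriminate.
Qed.

Lemma main_in : forall t, 0 < t ->
  (SignalOpen_guard dopen t (rho t) <->
     becomes_true (fun s => SafeToOpen dopen s (rho s)) t) /\
  (SignalOpen_guard dopen t (rho t) <->
     SignalOpen_fires dclose dopen dmin rho t) /\
  (SignalOpen_fires dclose dopen dmin rho t ->
     exists x : T, becomes (fun s => TrackStatus (rho s) x) t empty).
Proof.
  intros t Ht. split; [|split].
  - split; [|apply part1_bwd; auto].
    intros G. left. split; [apply part1_fwd; auto|]. apply G.
  - split; [|intros [_ G]; auto].
    intros G. split; auto. apply part2_fwd; auto.
  - intros [_ G].
    destruct (LV t Ht) as [sl Hsl].
    destruct (left_witness t sl Ht (proj2 G) Hsl (part1_fwd t Ht G)) as [x [A B]].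
    exists x. left. exists (TrackStatus sl x). split; [|split; auto].
    destruct Hsl as [e0 [He0 Hc]]. exists e0. split; auto.
    intros s Hs. rewrite (Hc s Hs). auto.
Qed.

End Model.

Theorem mainTheorem8 (T : Type) (HT : Finite T)
  (dclose dopen dmin dmax : R)
  (Hclose : 0 < dclose) (Hopen : 0 < dopen) (Hmin : 0 < dmin) (Hmax : 0 < dmax)
  (Hcm : dclose < dmin) (Hmm : dmin <= dmax)
  (rho : R -> State T)
  (Hreg : regular_run dclose dopen dmin dmax rho)
  (t : R) (Ht : 0 < t) :
  (SignalOpen_guard dopen t (rho t) <->
     becomes_true (fun s => SafeToOpen dopen s (rho s)) t) /\
  (SignalOpen_guard dopen t (rho t) <->
     SignalOpen_fires dclose dopen dmin rho t) /\
  (SignalOpen_fires dclose dopen dmin rho t ->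
     exists x : T, becomes (fun s => TrackStatus (rho s) x) t empty).
Proof.
  eapply main_in; eauto.
Qed.
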